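(* Let $H$ be a Hessenberg space of $n\times n$ matrices that is minimal in its $E_{1n}$-equivalence class, and let $H=\sum_{(i,j)\in S}H_{ij}$ be a maximal decomposition. Then the irreducible components of $X_H$ are exactly the Schubert varieties $X_{H_{ij}}$, $(i,j)\in S$.
   Context: $B$ is the group of invertible upper-triangular $n\times n$ complex matrices; $[g]$ denotes the flag whose $k$-dimensional subspace is spanned by the first $k$ columns of $g$. $E_{kl}$ is the matrix unit with $1$ in entry $(k,l)$. A Hessenberg space is a subspace of the form $H_h=\operatorname{span}\{E_{kl}: k\le h(l)\}$ for a nondecreasing function $h:\{1,\dots,n\}\to\{0,1,\dots,n\}$. For $1\le i,j\le n$, $H_{ij}=\operatorname{span}\{E_{kl}: k\le i,\ l\ge j\}$. For a Hessenberg space $K$, $X_K=\{[g]\in GL_n(\mathbb{C})/B: g^{-1}E_{1n}g\in K\}$. Two Hessenberg spaces $K,K'$ are $E_{1n}$-equivalent if $X_K=X_{K'}$; $K$ is minimal in its class if no Hessenberg space properly contained in $K$ is $E_{1n}$-equivalent to it. A maximal decomposition of $H$ is an expression $H=\sum_{(i,j)\in S}H_{ij}$ (sum of subspaces) over a set $S$ of pairs such that no two distinct pairs $(i,j),(i',j')\in S$ satisfy $H_{ij}\subseteq H_{i'j'}$. (For $i\ne j$, $X_{H_{ij}}$ is a Schubert variety, i.e. the closure of a set $\{[bw]:b\in B\}$ for a permutation matrix $w$.) *)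

(* Defs.v *)
From HB Require Import structures.
From mathcomp Require Import all_boot all_order all_algebra.
From mathcomp Require Import Rstruct complex.
Set Implicit Arguments.
Unset Strict Implicit.
Unset Printing Implicit Defensive.
Import Order.TTheory GRing.Theory Num.Theory.
Local Open Scope ring_scope.

Definition Cx : Type := (Rdefinitions.R)[i].

Inductive polyfun (m : nat) : ('M[Cx]_m -> Cx) -> Prop :=
| pf_const (c : Cx) : polyfun (fun _ => c)
| pf_coord (i j : 'I_m) : polyfun (fun A => A i j)
| pf_add f g : polyfun f -> polyfun g -> polyfun (fun A => f A + g A)
| pf_mul f g : polyfun f -> polyfun g -> polyfun (fun A => f A * g A).

(* Subsets of GL_m(C) (and of GL_m(C)/B) are represented by predicates on
   matrices; only their values on invertible matrices matter. *)
Definition Bmat (m : nat) (b : 'M[Cx]_m) : Prop :=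
  b \in unitmx /\ forall i j : 'I_m, (j < i)%N -> b i j = 0.

Definition zclosed (m : nat) (Z : 'M[Cx]_m -> Prop) : Prop :=
  exists P : ('M[Cx]_m -> Cx) -> Prop,
    (forall f, P f -> polyfun f) /\
    forall g, g \in unitmx -> (Z g <-> forall f, P f -> f g = 0).

(* Right B-invariance: Y descends to a subset of the flag variety G/B. *)
Definition binv (m : nat) (Y : 'M[Cx]_m -> Prop) : Prop :=
  forall g b, g \in unitmx -> Bmat b -> (Y (g *m b) <-> Y g).

Definition fl_sub (m : nat) (Y Z : 'M[Cx]_m -> Prop) : Prop :=
  forall g, g \in unitmx -> Y g -> Z g.
Definition fl_eq (m : nat) (Y Z : 'M[Cx]_m -> Prop) : Prop :=
  fl_sub Y Z /\ fl_sub Z Y.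

(* Closed subsets of G/B: quotient topology of the Zariski topology of G
   (which is the Zariski topology of the flag variety). *)
Definition fl_closed (m : nat) (F : 'M[Cx]_m -> Prop) : Prop :=
  binv F /\ zclosed F.

Definition fl_irreducible (m : nat) (Y : 'M[Cx]_m -> Prop) : Prop :=
  (exists g, g \in unitmx /\ Y g) /\
  forall F1 F2, fl_closed F1 -> fl_closed F2 ->
    fl_sub Y (fun g => F1 g \/ F2 g) -> fl_sub Y F1 \/ fl_sub Y F2.

Definition fl_irr_component (m : nat) (X Y : 'M[Cx]_m -> Prop) : Prop :=
  [/\ binv Y, fl_sub Y X, fl_irreducible Y &
      forall Z, binv Z -> fl_sub Y Z -> fl_sub Z X -> fl_irreducible Z ->
        fl_sub Z Y].

(* Hessenberg spaces.  Indices are 0-based: row k, column l of 'I_m stand for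
   k+1, l+1; the condition k+1 <= h(l+1) becomes k < h l. *)
Definition is_hess (m : nat) (K : 'M[Cx]_m -> Prop) : Prop :=
  exists h : 'I_m -> nat,
    [/\ forall l l' : 'I_m, (l <= l')%N -> (h l <= h l')%N,
        forall l, (h l <= m)%N &
        forall A, K A <-> forall k l : 'I_m, (h l <= k)%N -> A k l = 0].

Definition Hij (m : nat) (s : 'I_m * 'I_m) (A : 'M[Cx]_m) : Prop :=
  forall k l : 'I_m, (s.1 < k)%N \/ (l < s.2)%N -> A k l = 0.

Definition Hsum (m : nat) (S : {set 'I_m * 'I_m}) (A : 'M[Cx]_m) : Prop :=
  exists F : 'I_m * 'I_m -> 'M[Cx]_m,
    (forall s, s \in S -> Hij s (F s)) /\ A = \sum_(s in S) F s.

Definition max_decomposition (m : nat) (H : 'M[Cx]_m -> Prop)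
    (S : {set 'I_m * 'I_m}) : Prop :=
  (forall A, H A <-> Hsum S A) /\
  forall s t, s \in S -> t \in S -> s != t ->
    ~ (forall A, Hij s A -> Hij t A).

(* E_{1n} for n = m.+1 *)
Definition E1n (n : nat) : 'M[Cx]_n.+1 := delta_mx ord0 ord_max.

Definition XK (n : nat) (K : 'M[Cx]_n.+1 -> Prop) : 'M[Cx]_n.+1 -> Prop :=
  fun g => K (invmx g *m E1n n *m g).

Definition proper_sub (m : nat) (K H : 'M[Cx]_m -> Prop) : Prop :=
  (forall A, K A -> H A) /\ exists A, H A /\ ~ K A.

Definition minimal_hess (n : nat) (H : 'M[Cx]_n.+1 -> Prop) : Prop :=
  is_hess H /\
  forall K, is_hess K -> proper_sub K H -> ~ fl_eq (XK K) (XK H).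

(* Main.v *)
Require Import Defs.
From HB Require Import structures.
From mathcomp Require Import all_boot all_order all_algebra.
From mathcomp Require Import Rstruct complex.
From Stdlib Require Import FunctionalExtensionality Classical.

Module Helpers.
Set Implicit Arguments.
Unset Strict Implicit.
Unset Printing Implicit Defensive.
Import Order.TTheory GRing.Theory Num.Theory.
Local Open Scope ring_scope.


Lemma pf_ext m (f g : 'M[Cx]_m -> Cx) : (forall A, f A = g A) -> polyfun f -> polyfun g.
Proof. by move=> e; have -> : f = g by apply: functional_extensionality. Qed.

Lemma pf_sum m (I : Type) (r : seq I) (P : pred I) (F : I -> 'M[Cx]_m -> Cx) :
  (forall i, polyfun (F i)) -> polyfun (fun A => \sum_(i <- r | P i) F i A).
Proof.
move=> hF; elim: r => [|x r IH].
  by apply: (pf_ext (f := fun _ => 0)) (pf_const _ _) => A; rewrite big_nil.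
case Px: (P x).
  apply: (pf_ext (f := fun A => F x A + \sum_(i <- r | P i) F i A)); last exact: pf_add.
  by move=> A; rewrite big_cons Px.
by apply: pf_ext IH => A; rewrite big_cons Px.
Qed.

Lemma pf_prod m (I : Type) (r : seq I) (P : pred I) (F : I -> 'M[Cx]_m -> Cx) :
  (forall i, polyfun (F i)) -> polyfun (fun A => \prod_(i <- r | P i) F i A).
Proof.
move=> hF; elim: r => [|x r IH].
  by apply: (pf_ext (f := fun _ => 1)) (pf_const _ _) => A; rewrite big_nil.
case Px: (P x).
  apply: (pf_ext (f := fun A => F x A * \prod_(i <- r | P i) F i A)); last exact: pf_mul.
  by move=> A; rewrite big_cons Px.
by apply: pf_ext IH => A; rewrite big_cons Px.
Qed.

Lemma pf_cofactor m (i j : 'I_m) : polyfun (fun A : 'M[Cx]_m => cofactor A i j).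
Proof.
apply: pf_ext; first by move=> A; rewrite expand_cofactor.
apply: pf_sum => s; apply: pf_mul; first exact: pf_const.
by apply: pf_prod => k; apply: pf_coord.
Qed.

Lemma pf_det m : polyfun (fun A : 'M[Cx]_m => \det A).
Proof.
apply: pf_ext; first by move=> A; rewrite -det_tr.
apply: pf_ext; first by move=> A; rewrite /determinant.
apply: pf_sum => s; apply: pf_mul; first exact: pf_const.
by apply: pf_prod => k; apply: pf_ext; [move=> A; rewrite mxE|apply: pf_coord].
Qed.

Lemma pf_line m (f : 'M[Cx]_m -> Cx) : polyfun f ->
  forall A B : 'M_m, exists p : {poly Cx}, forall t, f (A + t *: B) = p.[t].
Proof.
move=> pf A B; elim: pf.
- by move=> c; exists c%:P => t; rewrite hornerC.
- move=> i j; exists ((A i j)%:P + (B i j)%:P * 'X) => t.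
  by rewrite !mxE hornerD hornerM hornerX !hornerC mulrC.
- move=> f1 f2 _ [p1 h1] _ [p2 h2]; exists (p1 + p2) => t.
  by rewrite hornerD h1 h2.
- move=> f1 f2 _ [p1 h1] _ [p2 h2]; exists (p1 * p2) => t.
  by rewrite hornerM h1 h2.
Qed.

Lemma nonroot (p : {poly Cx}) : p != 0 -> exists t, t != 0 /\ ~~ root p t.
Proof.
move=> p0; apply: NNPP => hn.
pose s := [seq (k.+1)%:R : Cx | k <- iota 0 (size p)].
have : (size s < size p)%N.
  apply: max_poly_roots p0 _ _.
  - apply/allP => x /mapP [k _ ->]; apply: contraT => hk.
    by case: hn; exists (k.+1)%:R; rewrite pnatr_eq0.
  - rewrite map_inj_uniq ?iota_uniq // => a b /eqP; rewrite eqr_nat => /eqP [].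
    done.
by rewrite size_map size_iota ltnn.
Qed.


Section R1.
Variable N : nat.
Implicit Types (A : 'M[Cx]_N) (v w : 'I_N -> Cx) (s : 'I_N * 'I_N).

Lemma Hij_rank1 s A v w : (forall k l, A k l = v k * w l) ->
  (exists k, v k != 0) -> (exists l, w l != 0) ->
  (Hij s A <-> (forall k : 'I_N, (s.1 < k)%N -> v k = 0) /\
                (forall l : 'I_N, (l < s.2)%N -> w l = 0)).
Proof.
move=> hA [k0 hk0] [l0 hl0]; split.
- move=> h; split.
  + move=> k hk; have := h k l0 (or_introl hk); rewrite hA => /eqP.
    by rewrite mulf_eq0 (negbTE hl0) orbF => /eqP.
  + move=> l hl; have := h k0 l (or_intror hl); rewrite hA => /eqP.
    by rewrite mulf_eq0 (negbTE hk0) /= => /eqP.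
- move=> [h1 h2] k l [hk|hl]; rewrite hA.
  + by rewrite h1 // mul0r.
  + by rewrite h2 // mulr0.
Qed.

Lemma Hsum_rank1 (S : {set 'I_N * 'I_N}) A v w : (forall k l, A k l = v k * w l) ->
  (exists k, v k != 0) -> (exists l, w l != 0) ->
  (Hsum S A <-> exists s, s \in S /\ Hij s A).
Proof.
move=> hA [k1 hk1] [l1 hl1]; split.
- move=> [F [hF eA]].
  set k0 := [arg max_(k > k1 | v k != 0) (k : nat)].
  set l0 := [arg min_(l < l1 | w l != 0) (l : nat)].
  have [k0P k0M] : v k0 != 0 /\ forall k, v k != 0 -> (k <= k0)%N.
    by rewrite /k0; case: arg_maxnP => // i hi hm; split => // k hk; apply: hm.
  have [l0P l0M] : w l0 != 0 /\ forall l, w l != 0 -> (l0 <= l)%N.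
    by rewrite /l0; case: arg_minnP => // i hi hm; split => // k hk; apply: hm.
  have : (\sum_(s in S) F s) k0 l0 != 0.
    by rewrite -eA hA mulf_neq0.
  rewrite summxE => hne.
  have [s hs hsne] : exists2 s, s \in S & F s k0 l0 != 0.
    apply: NNPP => hn; move: hne; rewrite big1 ?eqxx // => s hs.
    by apply/eqP; apply: contraT => hne; case: hn; exists s.
  exists s; split => //.
  move=> k l [hk|hl]; rewrite hA.
  + have : ~~ (s.1 < k0)%N.
      by apply: contra hsne => hlt; apply/eqP; apply: hF => //; left.
    rewrite -leqNgt => hk0.
    have -> : v k = 0; last by rewrite mul0r.
    apply/eqP; apply: contraT => hv; have := k0M _ hv.
    by move=> hkk; move: (leq_trans hkk hk0); rewrite leqNgt hk.
  + have : ~~ (l0 < s.2)%N.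
      by apply: contra hsne => hlt; apply/eqP; apply: hF => //; right.
    rewrite -leqNgt => hl0.
    have -> : w l = 0; last by rewrite mulr0.
    apply/eqP; apply: contraT => hw; have := l0M _ hw.
    by move=> hll; move: (leq_trans hl0 hll); rewrite leqNgt hl.
- move=> [s [hs hAs]].
  exists (fun t => if t == s then A else 0); split.
  + move=> t ht; case: eqP => [->//|_] k l _; by rewrite mxE.
  + rewrite (bigD1 s) //= eqxx big1 ?addr0 // => t /andP [_ /negbTE ->] //.
Qed.
End R1.


Section G.
Variable n : nat.
Local Notation N := n.+1.
Implicit Types (g : 'M[Cx]_N).

Definition vv g (k : 'I_N) := invmx g k ord0.
Definition ww g (l : 'I_N) := g ord_max l.

Lemma conjE g k l : (invmx g *m E1n n *m g) k l = vv g k * ww g l.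
Proof.
rewrite /E1n -mulmxA mxE (bigD1 ord0) //= big1 ?addr0.
  rewrite mxE (bigD1 ord_max) //= big1 ?addr0.
    by rewrite mxE !eqxx mul1r.
  by move=> q /negbTE hq; rewrite mxE hq andbF mul0r.
move=> q /negbTE hq; rewrite mxE big1 ?mulr0 // => r _.
by rewrite mxE hq mul0r.
Qed.

Lemma vv_nz g : g \in unitmx -> exists k, vv g k != 0.
Proof.
move=> gu; apply: NNPP => hn.
have := mulmxV gu; move/matrixP => /(_ ord0 ord0); rewrite !mxE eqxx /=.
rewrite big1 => [/eqP|q _]; first by rewrite eq_sym oner_eq0.
have : vv g q = 0 by apply/eqP; apply: contraT => hq; case: hn; exists q.
by rewrite /vv => ->; rewrite mulr0.
Qed.

Lemma ww_nz g : g \in unitmx -> exists l, ww g l != 0.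
Proof.
move=> gu; apply: NNPP => hn.
have := mulmxV gu; move/matrixP => /(_ ord_max ord_max); rewrite !mxE eqxx /=.
rewrite big1 => [/eqP|q _]; first by rewrite eq_sym oner_eq0.
have : ww g q = 0 by apply/eqP; apply: contraT => hq; case: hn; exists q.
by rewrite /ww => ->; rewrite mul0r.
Qed.

Lemma vw_orth g : g \in unitmx -> (0 < n)%N -> \sum_q ww g q * vv g q = 0.
Proof.
move=> gu n0; have := mulmxV gu; move/matrixP => /(_ ord_max ord0); rewrite !mxE.
have -> : (ord_max == ord0 :> 'I_N) = false.
  by apply/negbTE; rewrite -val_eqE /= -lt0n.
done.
Qed.

Lemma XK_rank1 g : g \in unitmx -> forall k l,
  (invmx g *m E1n n *m g) k l = vv g k * ww g l.
Proof. by move=> _; apply: conjE. Qed.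

Lemma XK_Hij g s : g \in unitmx ->
  (XK (Hij s) g <-> (forall k : 'I_N, (s.1 < k)%N -> vv g k = 0) /\
                   (forall l : 'I_N, (l < s.2)%N -> ww g l = 0)).
Proof.
move=> gu; rewrite /XK; apply: Hij_rank1; [exact: conjE|exact: vv_nz|exact: ww_nz].
Qed.

Lemma XK_Hsum (S : {set 'I_N * 'I_N}) g : g \in unitmx ->
  (XK (Hsum S) g <-> exists s, s \in S /\ XK (Hij s) g).
Proof.
move=> gu; rewrite /XK; apply: Hsum_rank1; [exact: conjE|exact: vv_nz|exact: ww_nz].
Qed.
End G.


Lemma invmxM m (A B : 'M[Cx]_m) : A \in unitmx -> B \in unitmx ->
  invmx (A *m B) = invmx B *m invmx A.
Proof.
move=> Au Bu; have ABu : A *m B \in unitmx by rewrite unitmx_mul Au Bu.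
have e : (A *m B) *m (invmx B *m invmx A) = 1%:M.
  by rewrite -mulmxA (mulmxA B) mulmxV // mul1mx mulmxV.
by rewrite -[invmx (A *m B)]mulmx1 -e mulmxA mulVmx // mul1mx.
Qed.

Lemma Bmat_diag m (b : 'M[Cx]_m) : Bmat b -> forall l, b l l != 0.
Proof.
move=> [bu bt] l; move: bu; rewrite unitmxE unitfE -det_tr det_trig.
  rewrite (bigD1 l) //= mxE mulf_eq0 negb_or => /andP [] //.
apply/is_trig_mxP => i j hij; rewrite mxE; apply: bt; exact: hij.
Qed.

Lemma Bmat_inv m (b : 'M[Cx]_m) : Bmat b -> Bmat (invmx b).
Proof.
move=> hb; have bu := hb.1; split; first by rewrite unitmx_inv.
move=> k l0 hlk.
suff H : forall p (l : 'I_m), (l < p)%N -> (l < k)%N -> invmx b k l = 0.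
  exact: (H l0.+1 l0 (ltnSn _) hlk).
elim=> [//|p IH] {}l hlp hlk'.
have e := mulVmx bu; move/matrixP: e => /(_ k l); rewrite !mxE.
have -> : (k == l) = false by apply/negbTE; rewrite -val_eqE /= gtn_eqF.
rewrite (bigD1 l) //= big1 ?addr0.
  move/eqP; rewrite mulf_eq0 (negbTE (Bmat_diag hb l)) orbF => /eqP //.
move=> q hq; case: (ltngtP q l) => hql.
- rewrite (IH q) ?mul0r //; first exact: (leq_trans hql hlp).
  exact: (ltn_trans hql hlk').
- by rewrite hb.2 ?mulr0.
- by move: hq; rewrite -val_eqE /= hql eqxx.
Qed.

Section Cl.
Variable n : nat.
Local Notation N := n.+1.
Implicit Types (g : 'M[Cx]_N) (s : 'I_N * 'I_N).

Lemma XK_Hij_mulB g b s : g \in unitmx -> Bmat b ->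
  XK (Hij s) g -> XK (Hij s) (g *m b).
Proof.
move=> gu hb; have bu := hb.1; have gbu : g *m b \in unitmx by rewrite unitmx_mul gu bu.
rewrite (XK_Hij _ gu) (XK_Hij _ gbu) => [[h1 h2]]; split.
- move=> k hk; rewrite /vv invmxM // mxE big1 // => q _.
  case: (ltnP s.1 q) => hq.
  + by rewrite -/(vv g q) h1 ?mulr0.
  + by rewrite (Bmat_inv hb).2 ?mul0r // (leq_ltn_trans hq hk).
- move=> l hl; rewrite /ww mxE big1 // => q _.
  case: (ltnP q s.2) => hq.
  + by rewrite -/(ww g q) h2 ?mul0r.
  + case: (ltnP l q) => hlq; first by rewrite hb.2 ?mulr0.
    by move: (leq_trans hq hlq); rewrite leqNgt hl.
Qed.

Lemma binv_XK_Hij s : binv (XK (Hij s)).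
Proof.
move=> g b gu hb; split; last exact: XK_Hij_mulB.
move=> h; have bu := hb.1.
have gbu : g *m b \in unitmx by rewrite unitmx_mul gu bu.
have := XK_Hij_mulB gbu (Bmat_inv hb) h.
by rewrite mulmxK.
Qed.

Lemma zclosed_XK_Hij s : zclosed (XK (Hij s)).
Proof.
exists (fun f => exists k l : 'I_N, ((s.1 < k)%N \/ (l < s.2)%N) /\
          f = fun g => cofactor g ord0 k * g ord_max l); split.
  move=> f [k [l [_ ->]]]; apply: pf_mul; [exact: pf_cofactor|exact: pf_coord].
move=> g gu; have e : forall k l, (invmx g *m E1n n *m g) k l =
    (\det g)^-1 * (cofactor g ord0 k * g ord_max l).
  by move=> k l; rewrite conjE /vv /ww /invmx gu !mxE -mulrA.
have dn : (\det g)^-1 != 0 by rewrite invr_eq0 -unitfE -unitmxE.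
split.
- move=> h f [k [l [hkl ->]]]; have := h k l hkl; rewrite e => /eqP.
  by rewrite mulf_eq0 (negbTE dn) /= => /eqP.
- move=> h k l hkl; rewrite e (h (fun g => cofactor g ord0 k * g ord_max l)) ?mulr0 //.
  by exists k, l.
Qed.

Lemma closed_XK_Hij s : fl_closed (XK (Hij s)).
Proof. split; [exact: binv_XK_Hij|exact: zclosed_XK_Hij]. Qed.
End Cl.

Section Top.
Variable m : nat.
Implicit Types (F : 'M[Cx]_m -> Prop).

Lemma closed_iff F G : (forall g, F g <-> G g) -> fl_closed F -> fl_closed G.
Proof.
move=> e [hb [P [hP hz]]]; split.
  by move=> g b gu bb; rewrite -!e; apply: hb.
by exists P; split => // g gu; rewrite -e; apply: hz.
Qed.

Lemma closed_false : fl_closed (fun _ : 'M[Cx]_m => False).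
Proof.
split; first by [].
exists (fun f => f = fun _ => 1); split; first by move=> f ->; apply: pf_const.
move=> g _; split => // h; have := h _ erefl => /eqP; by rewrite oner_eq0.
Qed.

Lemma closed_or F1 F2 : fl_closed F1 -> fl_closed F2 ->
  fl_closed (fun g => F1 g \/ F2 g).
Proof.
move=> [b1 [P1 [hP1 z1]]] [b2 [P2 [hP2 z2]]]; split.
  by move=> g b gu bb; rewrite (b1 g b gu bb) (b2 g b gu bb).
exists (fun f => exists f1 f2, [/\ P1 f1, P2 f2 & f = fun g => f1 g * f2 g]); split.
  by move=> f [f1 [f2 [h1 h2 ->]]]; apply: pf_mul; [apply: hP1|apply: hP2].
move=> g gu; rewrite (z1 g gu) (z2 g gu); split.
- move=> [h|h] f [f1 [f2 [h1 h2 ->]]]; first by rewrite h // mul0r.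
  by rewrite (h f2) // mulr0.
- move=> h; apply: NNPP => hn.
  have [f1 [h1 n1]] : exists f1, P1 f1 /\ f1 g <> 0.
    by apply: NNPP => hn1; apply: hn; left => f1 hf1; apply: NNPP => c; apply: hn1; exists f1.
  have [f2 [h2 n2]] : exists f2, P2 f2 /\ f2 g <> 0.
    by apply: NNPP => hn1; apply: hn; right => f hf; apply: NNPP => c; apply: hn1; exists f.
  have := h (fun g => f1 g * f2 g) (ex_intro _ f1 (ex_intro _ f2 (And3 h1 h2 erefl))).
  by move/eqP; rewrite mulf_eq0 => /orP [] /eqP.
Qed.
End Top.

Lemma irr_in_union n (Y : 'M[Cx]_n.+1 -> Prop) (r : seq ('I_n.+1 * 'I_n.+1)) :
  fl_irreducible Y -> fl_sub Y (fun g => exists s, s \in r /\ XK (Hij s) g) ->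
  exists s, s \in r /\ fl_sub Y (XK (Hij s)).
Proof.
move=> [[g0 [g0u Yg0]] hirr]; elim: r => [|a r IH] hsub.
  by have [s [] ] := hsub g0 g0u Yg0.
have cr : forall r : seq ('I_n.+1 * 'I_n.+1), fl_closed (fun g => exists s, s \in r /\ XK (Hij s) g).
  elim=> [|b r' IHr].
    by apply: closed_iff (closed_false _) => g; split => // [[s []]].
  apply: closed_iff (closed_or (closed_XK_Hij b) IHr) => g; split.
  - by move=> [h|[s [hs h]]]; [exists b; rewrite inE eqxx|exists s; rewrite inE hs orbT].
  - move=> [s [] ]; rewrite inE => /orP [/eqP -> h|hs h]; [by left|right; by exists s].
have := hirr _ _ (closed_XK_Hij a) (cr r).
case.
- move=> g gu Yg; have [s [] ] := hsub g gu Yg; rewrite inE => /orP [/eqP <- h|hs h].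
    by left.
  by right; exists s.
- by move=> h; exists a; rewrite inE eqxx.
- move=> h; have [s [hs hY]] := IH h; exists s; by rewrite inE hs orbT.
Qed.


Section Def.
Variable n : nat.
Local Notation N := n.+1.
Implicit Types (g : 'M[Cx]_N).

Definition Dm (y : 'I_N -> Cx) (m : 'I_N) : 'M[Cx]_N :=
  \matrix_(k, l) (y k * (l == m)%:R).

Lemma DmDm y m : y m = 0 -> Dm y m *m Dm y m = 0.
Proof.
move=> ym; apply/matrixP => k l; rewrite /Dm !mxE (bigD1 m) //= big1 ?addr0.
  by rewrite !mxE ym mul0r mulr0.
by move=> q /negbTE hq; rewrite !mxE hq mulr0 mul0r.
Qed.

Definition ct g y m (t : Cx) := g *m (1%:M - t *: Dm y m).

Lemma ct_inv g y m t : g \in unitmx -> y m = 0 ->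
  ct g y m t \in unitmx /\ invmx (ct g y m t) = (1%:M + t *: Dm y m) *m invmx g.
Proof.
move=> gu ym.
have e : (1%:M - t *: Dm y m) *m (1%:M + t *: Dm y m) = 1%:M.
  rewrite mulmxDr mulmx1 mulmxBl mul1mx -scalemxAl -scalemxAr DmDm // !scaler0.
  by rewrite subr0 addrNK.
have [u1 u2] := mulmx1_unit e.
have cu : ct g y m t \in unitmx by rewrite unitmx_mul gu u1.
split => //; rewrite /ct invmxM //.
by have := mulKmx u1 (1%:M + t *: Dm y m); rewrite e mulmx1 => ->.
Qed.

Lemma ct_vv g y m t k : g \in unitmx -> y m = 0 ->
  vv (ct g y m t) k = vv g k + t * y k * vv g m.
Proof.
move=> gu ym; rewrite /vv (ct_inv t gu ym).2 mulmxDl mul1mx -scalemxAl !mxE; congr (_ + _).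
rewrite /Dm (bigD1 m) //= big1 ?addr0.
  by rewrite !mxE eqxx mulr1 mulrA.
by move=> q /negbTE hq; rewrite !mxE hq mulr0 mul0r.
Qed.

Lemma ct_ww g y m t l :
  ww (ct g y m t) l = ww g l - t * (\sum_q g ord_max q * y q) * (l == m)%:R.
Proof.
rewrite /ww /ct mulmxBr mulmx1 -scalemxAr !mxE; congr (_ - _).
rewrite /Dm -mulrA big_distrl /=; congr (_ * _).
by apply: eq_bigr => q _; rewrite !mxE mulrA.
Qed.

Lemma ct_line g y m t : ct g y m t = g + t *: (- (g *m Dm y m)).
Proof. by rewrite /ct mulmxBr mulmx1 -scalemxAr scalerN. Qed.

Lemma ct0 g y m : ct g y m 0 = g.
Proof. by rewrite /ct scale0r subr0 mulmx1. Qed.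

Lemma curve_closed (F : 'M[Cx]_N -> Prop) g B : fl_closed F -> g \in unitmx ->
  (forall t, t != 0 -> g + t *: B \in unitmx /\ F (g + t *: B)) -> F g.
Proof.
move=> [_ [P [hP hz]]] gu h; apply/(hz g gu) => f Pf.
have [p hp] := pf_line (hP f Pf) g B.
have p0 : p = 0.
  apply/eqP; apply: contraT => pn; have [t [tn tr]] := nonroot pn.
  have [tu Ft] := h t tn; move: tr; rewrite /root -hp.
  by rewrite ((hz _ tu).1 Ft f Pf) eqxx.
by have := hp 0; rewrite scale0r addr0 p0 horner0.
Qed.
End Def.


Section Irr.
Variable n : nat.
Local Notation N := n.+1.
Implicit Types (g h : 'M[Cx]_N).
Variables i j : 'I_N.
Hypothesis hij : i != j.
Local Notation s := (i, j).

Lemma n_pos : (0 < n)%N.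
Proof.
rewrite lt0n; apply: contraNneq hij => n0; apply/eqP; apply: val_inj => /=.
move: (ltn_ord i) (ltn_ord j); move: (nat_of_ord i) (nat_of_ord j) => a b.
by rewrite n0 !ltnS !leqn0 => /eqP -> /eqP ->.
Qed.

Lemma max_neq0 : (ord_max : 'I_N) != ord0.
Proof. by rewrite -val_eqE /= -lt0n n_pos. Qed.

Definition Lp h := (forall k : 'I_N, k != ord0 -> h k i = 0) /\
                   (forall l : 'I_N, (l < j)%N -> h ord_max l = 0).

Lemma Lp_X h : h \in unitmx -> Lp h -> XK (Hij s) h.
Proof.
move=> hu [h1 h2]; apply/(XK_Hij _ hu); split => //.
have e : forall k, vv h k * h ord0 i = (k == i)%:R.
  move=> k; have := mulVmx hu; move/matrixP => /(_ k i); rewrite !mxE => <-.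
  rewrite (bigD1 ord0) //= big1 ?addr0 // => q hq; by rewrite h1 ?mulr0.
have l0 : h ord0 i != 0.
  by apply/eqP => h0; move: (e i); rewrite h0 mulr0 eqxx => /eqP; rewrite eq_sym oner_eq0.
move=> k hk; have := e k; rewrite (_ : (k == i) = false).
  by move/eqP; rewrite mulf_eq0 (negbTE l0) orbF => /eqP.
by apply/negbTE; rewrite -val_eqE /= gtn_eqF.
Qed.

Section WithF.
Variable F : 'M[Cx]_N -> Prop.
Hypothesis Fc : fl_closed F.
Hypothesis HL : forall h, h \in unitmx -> Lp h -> F h.

Lemma gen g : g \in unitmx -> XK (Hij s) g -> vv g i != 0 -> F g.
Proof.
move=> gu /(XK_Hij _ gu) [X1 X2] vi.
pose b : 'M[Cx]_N := \matrix_(k, l) if l == i then vv g k else (k == l)%:R.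
have bt : forall k l : 'I_N, (l < k)%N -> b k l = 0.
  move=> k l hlk; rewrite mxE; case: eqP => [el|_].
    by apply: X1; rewrite -el.
  have -> : (k == l) = false by apply/negbTE; rewrite -val_eqE /= gtn_eqF.
  done.
have bu : b \in unitmx.
  rewrite unitmxE unitfE -det_tr det_trig.
    rewrite (bigD1 i) //= big1 ?mulr1; first by rewrite !mxE eqxx.
    by move=> q /negbTE hq; rewrite !mxE hq eqxx.
  by apply/is_trig_mxP => k l hkl; rewrite mxE bt.
have hb : Bmat b by split.
have gbu : g *m b \in unitmx by rewrite unitmx_mul gu bu.
have ci : forall k, (g *m b) k i = (k == ord0)%:R.
  move=> k; have := mulmxV gu; move/matrixP => /(_ k ord0); rewrite !mxE => <-.
  by apply: eq_bigr => q _; rewrite !mxE eqxx.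
apply/(Fc.1 g b gu hb); apply: HL gbu _; split.
- by move=> k /negbTE hk; rewrite ci hk.
- move=> l hl; case: (eqVneq l i) => [->|li].
    by rewrite ci (negbTE max_neq0).
  rewrite mxE (bigD1 l) //= big1 ?addr0.
    by rewrite mxE (negbTE li) eqxx mulr1; apply: X2.
  by move=> q hq; rewrite mxE (negbTE li) (negbTE hq) mulr0.
Qed.

Lemma stepA g m : g \in unitmx -> XK (Hij s) g -> vv g m != 0 ->
  (j <= m)%N \/ g ord_max i = 0 -> F g.
Proof.
move=> gu X vm hm; case: (eqVneq (vv g i) 0) => vi; last exact: gen.
pose y := fun k : 'I_N => (k == i)%:R : Cx.
have mi : m != i by apply: contraNneq vm => ->; rewrite vi.
have ym : y m = 0 by rewrite /y (negbTE mi).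
apply: (curve_closed (B := - (g *m Dm y m))) => // t tn.
rewrite -ct_line; have [cu _] := ct_inv t gu ym; split => //.
move/(XK_Hij _ gu): X => [X1 X2].
have Xc : XK (Hij s) (ct g y m t).
  apply/(XK_Hij _ cu); split.
  - move=> k hk; rewrite ct_vv // X1 // /y (_ : (k == i) = false) ?mulr0 ?mul0r ?addr0 //.
    by apply/negbTE; rewrite -val_eqE /= gtn_eqF.
  - move=> l hl; rewrite ct_ww X2 // sub0r.
    case: eqP => [elm|_]; last by rewrite mulr0 oppr0.
    have -> : \sum_q g ord_max q * y q = g ord_max i.
      rewrite (bigD1 i) //= big1 ?addr0; first by rewrite /y eqxx mulr1.
      by move=> q /negbTE hq; rewrite /y hq mulr0.
    case: hm => [hjm|->]; last by rewrite mulr0 mul0r oppr0.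
    by move: hl; rewrite elm ltnNge hjm.
apply: gen cu Xc _; rewrite ct_vv // vi add0r /y eqxx mulr1.
by rewrite mulf_neq0.
Qed.

Lemma stepY g m y m' : g \in unitmx -> XK (Hij s) g -> vv g m != 0 -> y m = 0 ->
  (forall k : 'I_N, (i < k)%N -> y k = 0) -> \sum_q g ord_max q * y q = 0 ->
  y m' != 0 -> vv g m' = 0 -> (j <= m')%N -> F g.
Proof.
move=> gu X vm ym yi ys ym' vm' jm.
apply: (curve_closed (B := - (g *m Dm y m))) => // t tn.
rewrite -ct_line; have [cu _] := ct_inv t gu ym; split => //.
move/(XK_Hij _ gu): X => [X1 X2].
have Xc : XK (Hij s) (ct g y m t).
  apply/(XK_Hij _ cu); split.
  - by move=> k hk; rewrite ct_vv // X1 // yi // mulr0 mul0r addr0.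
  - by move=> l hl; rewrite ct_ww X2 // ys mulr0 mul0r subr0.
apply: (stepA (m := m') cu Xc); last by left.
by rewrite ct_vv // vm' add0r !mulf_neq0.
Qed.

Lemma XK_sub g : g \in unitmx -> XK (Hij s) g -> F g.
Proof.
move=> gu X; have [m0 vm0] := vv_nz gu.
have [X1 X2] := (XK_Hij _ gu).1 X.
case: (ltngtP i j) => hc.
- by apply: (stepA (m := m0)) => //; right; apply: X2.
- case: (classic (exists m : 'I_N, (j <= m)%N /\ vv g m != 0)) => [[m [jm vm]]|hn].
    by apply: (stepA (m := m)) => //; left.
  have vz : forall k : 'I_N, (j <= k)%N -> vv g k = 0.
    by move=> k jk; apply/eqP; apply: contraT => hk; case: hn; exists k.
  have hj1 : (j.+1 < N)%N by apply: leq_ltn_trans hc (ltn_ord i).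
  pose j1 : 'I_N := Ordinal hj1.
  have m0j : (m0 < j)%N by rewrite ltnNge; apply/negP => hh; move: vm0; rewrite vz ?eqxx.
  case: (eqVneq (g ord_max j) 0) => a0.
  + pose y := fun k : 'I_N => (k == j)%:R : Cx.
    apply: (stepY (m := m0) (y := y) (m' := j)) => //.
    * by rewrite /y (_ : (m0 == j) = false) //; apply/negbTE; rewrite -val_eqE /= ltn_eqF.
    * move=> k hk; rewrite /y (_ : (k == j) = false) //; apply/negbTE; rewrite -val_eqE /= gtn_eqF //.
      exact: ltn_trans hc hk.
    * rewrite (bigD1 j) //= big1 ?addr0; first by rewrite /y eqxx mulr1.
      by move=> q /negbTE hq; rewrite /y hq mulr0.
    * by rewrite /y eqxx oner_eq0.
    * exact: vz.
  + pose y := fun k : 'I_N => g ord_max j1 * (k == j)%:R - g ord_max j * (k == j1)%:R.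
    have jj1 : (j == j1) = false by apply/negbTE; rewrite -val_eqE /= ltn_eqF.
    have j1j : (j1 == j) = false by rewrite eq_sym.
    apply: (stepY (m := m0) (y := y) (m' := j1)) => //.
    * rewrite /y (_ : (m0 == j) = false); last by apply/negbTE; rewrite -val_eqE /= ltn_eqF.
      rewrite (_ : (m0 == j1) = false) ?mulr0 ?subr0 //.
      by apply/negbTE; rewrite -val_eqE /= ltn_eqF // ltnW.
    * move=> k hk; rewrite /y (_ : (k == j) = false); last first.
        by apply/negbTE; rewrite -val_eqE /= gtn_eqF // (ltn_trans hc hk).
      rewrite (_ : (k == j1) = false) ?mulr0 ?subr0 //.
      by apply/negbTE; rewrite -val_eqE /= gtn_eqF // (leq_ltn_trans hc hk).
    * rewrite (bigD1 j) //= (bigD1 j1) 1?eq_sym ?jj1 //= big1 ?addr0.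
        by rewrite /y eqxx jj1 j1j !mulr1 !mulr0 subr0 sub0r mulrN eqxx mulr1 mulrC subrr.
      by move=> q /andP [/negbTE h1 /negbTE h2]; rewrite /y h1 h2 !mulr0 subr0 mulr0.
    * by rewrite /y eqxx j1j mulr0 sub0r mulr1 oppr_eq0.
    * by apply: vz; rewrite /j1 /= leqnSn.
- by move: hij; rewrite -val_eqE /= hc eqxx.
Qed.
End WithF.

Lemma Lp_line h1 h2 t : Lp h1 -> Lp h2 -> Lp (h1 + t *: (h2 - h1)).
Proof.
move=> [a1 a2] [b1 b2]; split.
- by move=> k hk; rewrite !mxE a1 // b1 // subrr mulr0 addr0.
- by move=> l hl; rewrite !mxE a2 // b2 // subrr mulr0 addr0.
Qed.

Lemma not_closed_witness (F : 'M[Cx]_N -> Prop) h : fl_closed F -> h \in unitmx -> ~ F h ->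
  exists f, polyfun f /\ (forall g, g \in unitmx -> F g -> f g = 0) /\ f h != 0.
Proof.
move=> [_ [P [hP hz]]] hu nF; apply: NNPP => hn; apply: nF; apply/(hz h hu) => f Pf.
apply/eqP; apply: contraT => fh; case: hn; exists f; split; first exact: hP.
by split => // g gu Fg; apply: (hz g gu).1.
Qed.

Lemma irr_Hij : fl_irreducible (XK (Hij s)).
Proof.
split.
  exists 1%:M; split; first exact: unitmx1.
  have u1 : (1%:M : 'M[Cx]_N) \in unitmx by exact: unitmx1.
  apply/(XK_Hij _ u1); split.
  - by move=> k hk; rewrite /vv invmx1 mxE (_ : (k == ord0) = false) //; apply/negbTE;
      rewrite -val_eqE /= gtn_eqF // (leq_ltn_trans _ hk).
  - move=> l hl; rewrite /ww mxE (_ : (ord_max == l) = false) //.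
    apply/negbTE; rewrite -val_eqE /= gtn_eqF //.
    exact: leq_trans hl (leq_ord j).
move=> F1 F2 c1 c2 hsub.
suff : (forall h, h \in unitmx -> Lp h -> F1 h) \/ (forall h, h \in unitmx -> Lp h -> F2 h).
  by case=> H; [left|right] => g gu X; apply: XK_sub H g gu X.
apply: NNPP => hn.
have [h1 [h1u [L1 n1]]] : exists h, h \in unitmx /\ Lp h /\ ~ F1 h.
  apply: NNPP => c; apply: hn; left => h hu Lh; apply: NNPP => nF; apply: c; by exists h.
have [h2 [h2u [L2 n2]]] : exists h, h \in unitmx /\ Lp h /\ ~ F2 h.
  apply: NNPP => c; apply: hn; right => h hu Lh; apply: NNPP => nF; apply: c; by exists h.
have [f1 [pf1 [z1 nz1]]] := not_closed_witness c1 h1u n1.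
have [f2 [pf2 [z2 nz2]]] := not_closed_witness c2 h2u n2.
have [p1 e1] := pf_line pf1 h1 (h2 - h1).
have [p2 e2] := pf_line pf2 h1 (h2 - h1).
have [pd ed] := pf_line (@pf_det N) h1 (h2 - h1).
have q0 : p1 * p2 * pd != 0.
  rewrite !mulf_neq0 //.
  - by apply: contraNneq nz1 => p0; rewrite -(addr0 h1) -(scale0r (h2 - h1)) e1 p0 horner0.
  - apply: contraNneq nz2 => p0.
    by rewrite -[h2](addrNK h1) addrC -(scale1r (h2 - h1)) e2 p0 horner0.
  - apply: contraTneq h1u => p0; rewrite unitmxE unitfE negbK.
    by rewrite -(addr0 h1) -(scale0r (h2 - h1)) ed p0 horner0.
have [t [_ tr]] := nonroot q0.
move: tr; rewrite /root !hornerE -e1 -e2 -ed !mulf_eq0 !negb_or => /andP [/andP [a1 a2] a3].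
have lu : h1 + t *: (h2 - h1) \in unitmx by rewrite unitmxE unitfE.
have := hsub _ lu (Lp_X lu (Lp_line t L1 L2)); case => [H|H].
- by move: a1; rewrite z1 ?eqxx.
- by move: a2; rewrite z2 ?eqxx.
Qed.
End Irr.


Section Main.
Variable n : nat.
Local Notation N := n.+1.
Variable H : 'M[Cx]_N -> Prop.
Variable S : {set 'I_N * 'I_N}.
Hypothesis hmin : minimal_hess H.
Hypothesis hdec : max_decomposition H S.

Lemma Hsum_box t A : t \in S -> Hij t A -> Hsum S A.
Proof.
move=> tS hA; exists (fun u => if u == t then A else 0); split.
+ move=> u _; case: eqP => [->//|_] k l _; by rewrite mxE.
+ rewrite (bigD1 t) //= eqxx big1 ?addr0 // => u /andP [_ /negbTE ->] //.
Qed.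

Lemma box_H t A : t \in S -> Hij t A -> H A.
Proof. by move=> tS hA; apply/(hdec.1 A); apply: Hsum_box tS hA. Qed.

Lemma box_incl (s t : 'I_N * 'I_N) : (s.1 <= t.1)%N -> (t.2 <= s.2)%N ->
  forall A, Hij s A -> Hij t A.
Proof.
move=> h1 h2 A hA k l [hk|hl]; apply: hA.
- by left; apply: leq_ltn_trans h1 hk.
- by right; apply: leq_trans hl h2.
Qed.

Lemma corner_out s t : s \in S -> t \in S -> s != t ->
  (t.1 < s.1)%N \/ (s.2 < t.2)%N.
Proof.
move=> sS tS st; case: (ltnP t.1 s.1) => h1; first by left.
case: (ltnP s.2 t.2) => h2; first by right.
by case: (hdec.2 s t sS tS st); apply: box_incl.
Qed.

Lemma XK_H_iff g : g \in unitmx -> (XK H g <-> exists t, t \in S /\ XK (Hij t) g).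
Proof.
move=> gu; rewrite /XK (hdec.1 _); exact: (XK_Hsum S gu).
Qed.

Definition ind (k : 'I_N) := fun q : 'I_N => (q == k)%:R : Cx.

Lemma delta_rank1 (k l : 'I_N) : forall a b, (delta_mx k l : 'M[Cx]_N) a b = ind k a * ind l b.
Proof. by move=> a b; rewrite mxE /ind; case: (a == k); case: (b == l); rewrite ?mulr0 ?mulr1. Qed.

Lemma ind_nz k : exists q, ind k q != 0.
Proof. by exists k; rewrite /ind eqxx oner_eq0. Qed.

Lemma delta_H (k l : 'I_N) : H (delta_mx k l) <-> exists t, t \in S /\ (k <= t.1)%N /\ (t.2 <= l)%N.
Proof.
rewrite (hdec.1 _) (Hsum_rank1 S (delta_rank1 k l) (ind_nz k) (ind_nz l)).
split => [[t [tS ht]]|[t [tS [h1 h2]]]]; exists t; split => //.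
- move: ht => /(Hij_rank1 t (delta_rank1 k l) (ind_nz k) (ind_nz l)) [h1 h2]; split.
  + rewrite leqNgt; apply/negP => hk; move: (h1 k hk); rewrite /ind eqxx => /eqP.
    by rewrite oner_eq0.
  + rewrite leqNgt; apply/negP => hl; move: (h2 l hl); rewrite /ind eqxx => /eqP.
    by rewrite oner_eq0.
- apply/(Hij_rank1 t (delta_rank1 k l) (ind_nz k) (ind_nz l)); split.
  + move=> q hq; rewrite /ind (_ : (q == k) = false) //; apply/negbTE.
    by rewrite -val_eqE /= gtn_eqF // (leq_ltn_trans h1 hq).
  + move=> q hq; rewrite /ind (_ : (q == l) = false) //; apply/negbTE.
    by rewrite -val_eqE /= ltn_eqF // (leq_trans hq h2).
Qed.

Lemma corner_contra s (Q : 'M[Cx]_N -> Prop) : s \in S ->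
  (forall A, Q A -> H A) -> (forall A, Q A -> A s.1 s.2 = 0) ->
  fl_sub (XK (Hij s)) (XK Q) -> False.
Proof.
move=> sS QH Q0 hsub.
have [h [hmono hbd hH]] := hmin.1.
set a := s.1; set b := s.2.
have hdel : forall k l : 'I_N, H (delta_mx k l) <-> (k < h l)%N.
  move=> k l; rewrite hH; split.
  - move=> hz; rewrite ltnNge; apply/negP => hk; move: (hz k l hk).
    by rewrite mxE !eqxx => /eqP; rewrite oner_eq0.
  - move=> hk k' l' hl'; rewrite mxE.
    case: eqP => [ek|_] //=; case: eqP => [el|_] //=.
    by move: hl'; rewrite ek el leqNgt hk.
have sH : H (delta_mx a b).
  apply: (box_H sS) => k l [hk|hl]; rewrite mxE.
  - by rewrite (_ : (k == a) = false) //; apply/negbTE; rewrite -val_eqE /= gtn_eqF.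
  - by rewrite (_ : (l == b) = false) ?andbF //; apply/negbTE; rewrite -val_eqE /= ltn_eqF.
have hab : (a < h b)%N by apply/hdel.
have hb1 : (h b <= a.+1)%N.
  rewrite leqNgt; apply/negP => hlt.
  have aN : (a.+1 < N)%N by apply: leq_trans hlt (hbd b).
  have := (hdel (Ordinal aN) b).2 hlt; move/delta_H => [t [tS [h1 h2]]].
  have st : s != t by apply/negP => /eqP est; move: h1; rewrite -est /= -/a ltnn.
  by case: (corner_out sS tS st) => hc; [move: (leq_trans h1 (ltnW hc)); rewrite /= ltnn|
    move: (leq_ltn_trans h2 hc); rewrite ltnn].
have hb2 : forall l : 'I_N, (l < b)%N -> (h l <= a)%N.
  move=> l hl; rewrite leqNgt; apply/negP => hlt.
  have := (hdel a l).2 hlt; move/delta_H => [t [tS [h1 h2]]].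
  have st : s != t.
    by apply/negP => /eqP est; move: h2; rewrite -est /= -/b leqNgt hl.
  case: (corner_out sS tS st) => hc; first by move: (leq_ltn_trans h1 hc); rewrite ltnn.
  by move: (leq_trans (leq_trans hc h2) (ltnW hl)); rewrite ltnn.
pose h' := fun l : 'I_N => if l == b then (a : nat) else h l.
pose K := fun A : 'M[Cx]_N => forall k l : 'I_N, (h' l <= k)%N -> A k l = 0.
have hK : is_hess K.
  exists h'; split => //.
  - move=> l l' hll'; rewrite /h'.
    case: (eqVneq l b) => [elb|nlb]; case: (eqVneq l' b) => [el'b|nl'b] //.
    + apply: ltnW; apply: (leq_trans hab); apply: hmono; by rewrite -elb.
    + apply: hb2; rewrite -el'b ltn_neqAle hll' andbT.
      by move: nlb; rewrite -el'b -val_eqE.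
    + exact: hmono.
  - move=> l; rewrite /h'; case: eqP => _ //; exact: ltnW (ltn_ord a).
have KH : forall A, K A -> H A.
  move=> A hA; apply/hH => k l hk; apply: hA; apply: leq_trans hk.
  rewrite /h'; case: eqP => [->|_] //; exact: ltnW.
have HK : forall A, H A -> A a b = 0 -> K A.
  move=> A hA a0 k l; rewrite /h'; case: (eqVneq l b) => [->|nl] hk.
  - case: (eqVneq k a) => [->//|nk].
    apply: ((hH A).1 hA k b); apply: leq_trans hb1 _.
    by rewrite ltn_neqAle eq_sym hk andbT; move: nk; rewrite -val_eqE.
  - exact: (hH A).1 hA k l hk.
apply: (hmin.2 K hK).
- split; first exact: KH.
  exists (delta_mx a b); split => // hk.
  by move: (hk a b); rewrite /h' eqxx leqnn mxE !eqxx => /(_ isT) /eqP; rewrite oner_eq0.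
- split; first by move=> g gu; rewrite /XK; apply: KH.
  move=> g gu X; have [t [tS Xt]] := (XK_H_iff gu).1 X.
  case: (eqVneq t s) => [ets|nts].
  + rewrite ets in Xt; have := hsub g gu Xt; rewrite /XK => hQ.
    by apply: HK; [apply: QH|apply: Q0].
  + rewrite /XK; apply: HK; first exact: box_H tS Xt.
    apply: Xt; rewrite eq_sym in nts; exact: corner_out sS tS nts.
Qed.

Lemma no_contain (s t : 'I_N * 'I_N) : s \in S -> t \in S -> s != t ->
  fl_sub (XK (Hij s)) (XK (Hij t)) -> False.
Proof.
move=> sS tS st hsub; apply: (corner_contra sS (Q := Hij t)) hsub.
- by move=> A; apply: box_H.
- move=> A hA; apply: hA; exact: corner_out sS tS st.
Qed.

Lemma XK_Hij_id (s : 'I_N * 'I_N) : XK (Hij s) 1%:M.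
Proof.
have u1 : (1%:M : 'M[Cx]_N) \in unitmx by exact: unitmx1.
apply/(XK_Hij _ u1); split.
- by move=> k hk; rewrite /vv invmx1 mxE (_ : (k == ord0) = false) //; apply/negbTE;
    rewrite -val_eqE /= gtn_eqF // (leq_ltn_trans _ hk).
- move=> l hl; rewrite /ww mxE (_ : (ord_max == l) = false) //.
  apply/negbTE; rewrite -val_eqE /= gtn_eqF //.
  exact: leq_trans hl (leq_ord s.2).
Qed.

Lemma no_diag (s : 'I_N * 'I_N) : s \in S -> (0 < n)%N -> s.1 = s.2 -> False.
Proof.
move=> sS n0 e; set i := s.1.
have im1 : (i.-1 < N)%N by apply: leq_ltn_trans (leq_pred _) (ltn_ord i).
pose Q := fun A : 'M[Cx]_N =>
  ((0 < i)%N /\ Hij (Ordinal im1, i) A) \/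
  (exists hi : (i.+1 < N)%N, Hij (i, Ordinal hi) A).
apply: (corner_contra sS (Q := Q)).
- move=> A [[i0 hA]|[hi hA]]; apply: (box_H sS); move: hA; apply: box_incl => //=.
  + by rewrite -/i leq_pred.
  + by rewrite -e.
  + by rewrite -e leqnSn.
- move=> A [[i0 hA]|[hi hA]]; apply: hA => /=.
  + by left; rewrite -/i prednK.
  + by right; rewrite -e.
- move=> g gu /(XK_Hij _ gu) [X1 X2]; rewrite /XK.
  have orth := vw_orth gu n0.
  case: (eqVneq (vv g i) 0) => vi.
  + have i0 : (0 < i)%N.
      rewrite lt0n; apply/negP => /eqP i0; have [k vk] := vv_nz gu; move: vk.
      case: (eqVneq (k : nat) 0) => k0.
        by rewrite (_ : k = i) ?vi ?eqxx //; apply: val_inj; rewrite /= k0 i0.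
      by rewrite X1 ?eqxx // -/i i0 lt0n.
    left; split => //; apply/(XK_Hij _ gu); split => /=.
    * move=> k hk; case: (eqVneq k i) => [->//|ki]; apply: X1.
      by rewrite -/i ltn_neqAle eq_sym; move: ki; rewrite -val_eqE /= => ->; rewrite -(prednK i0).
    * by move=> l hl; apply: X2; rewrite -e.
  + have wi : ww g i = 0.
      move: orth; rewrite (bigD1 i) //= big1 ?addr0.
        by move/eqP; rewrite mulf_eq0 (negbTE vi) orbF => /eqP.
      move=> q hq; case: (ltngtP q i) => hc.
      * by rewrite X2 ?mul0r // -e.
      * by rewrite X1 ?mulr0.
      * by move: hq; rewrite -val_eqE /= hc eqxx.
    have hi : (i.+1 < N)%N.
      rewrite ltnS ltn_neqAle -ltnS ltn_ord andbT; apply/negP => /eqP iN.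
      have [l wl] := ww_nz gu; move: wl; case: (ltnP l i) => hl.
        by rewrite X2 ?eqxx // -e.
      rewrite (_ : l = i) ?wi ?eqxx //; apply: val_inj; apply/eqP.
      by rewrite eqn_leq hl /= -/i iN -ltnS ltn_ord.
    right; exists hi; apply/(XK_Hij _ gu); split => //=.
    move=> l hl; case: (eqVneq l i) => [->//|li]; apply: X2; rewrite -e.
    by rewrite ltn_neqAle -ltnS hl andbT; move: li; rewrite -val_eqE.
Qed.

Lemma irr_any (s : 'I_N * 'I_N) : s \in S -> fl_irreducible (XK (Hij s)).
Proof.
move=> sS; case: (eqVneq s.1 s.2) => hs; last exact: irr_Hij hs.
case: (posnP n) => n0; last by case: (no_diag sS n0 hs).
split; first by exists 1%:M; split; [exact: unitmx1|exact: XK_Hij_id].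
have allB : forall g : 'M[Cx]_N, g \in unitmx -> Bmat g.
  move=> g gu; split => // k l hlk; exfalso.
  by move: (ltn_ord k) (ltn_ord l) hlk; move: (nat_of_ord k) (nat_of_ord l) => a c;
    rewrite n0 !ltnS !leqn0 => /eqP -> /eqP ->.
move=> F1 F2 c1 c2 hsub.
have u1 : (1%:M : 'M[Cx]_N) \in unitmx by exact: unitmx1.
case: (hsub _ u1 (XK_Hij_id (s:=s))) => h1; [left|right] => g gu _.
- by have := (c1.1 1%:M g u1 (allB g gu)).2 h1; rewrite mul1mx.
- by have := (c2.1 1%:M g u1 (allB g gu)).2 h1; rewrite mul1mx.
Qed.

Lemma in_some_box Y : fl_irreducible Y -> fl_sub Y (XK H) ->
  exists s, s \in S /\ fl_sub Y (XK (Hij s)).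
Proof.
move=> hY hs.
have hcov : fl_sub Y (fun g => exists s, s \in enum S /\ XK (Hij s) g).
  move=> g gu Yg; have [t [tS Xt]] := (XK_H_iff gu).1 (hs g gu Yg).
  by exists t; rewrite mem_enum.
have [s [hsS hsub]] := irr_in_union hY hcov.
by exists s; rewrite -mem_enum.
Qed.

Lemma box_sub_XH (s : 'I_N * 'I_N) : s \in S -> fl_sub (XK (Hij s)) (XK H).
Proof. by move=> sS g gu; rewrite /XK; apply: box_H. Qed.

Local Close Scope ring_scope.
Theorem main_result :
  (forall Y, fl_irr_component (XK H) Y ->
     exists2 s, s \in S & fl_eq Y (XK (Hij s))) /\
  (forall s, s \in S -> fl_irr_component (XK H) (XK (Hij s))).
Proof.
split.
- move=> Y [Yb Ysub Yirr Ymax].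
  have [s [sS hs]] := in_some_box Yirr Ysub.
  exists s => //; split => //.
  apply: Ymax => //; [exact: binv_XK_Hij|exact: box_sub_XH|exact: irr_any].
- move=> s sS; split; [exact: binv_XK_Hij|exact: box_sub_XH|exact: irr_any|].
  move=> Z Zb hsZ hZX Zirr.
  have [t [tS hZt]] := in_some_box Zirr hZX.
  case: (eqVneq s t) => [->//|st].
  by case: (no_contain sS tS st (fun g gu X => hZt g gu (hsZ g gu X))).
Qed.
End Main.

End Helpers.
Unset Implicit Arguments.

(* Matrices are (n+1) x (n+1), i.e. all sizes >= 1; indices 0-based. *)
Theorem mainTheorem8 (n : nat) (H : 'M[Cx]_n.+1 -> Prop)
    (S : {set 'I_n.+1 * 'I_n.+1}) :
  minimal_hess H -> max_decomposition H S ->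
  (forall Y, fl_irr_component (XK H) Y ->
     exists2 s, s \in S & fl_eq Y (XK (Hij s))) /\
  (forall s, s \in S -> fl_irr_component (XK H) (XK (Hij s))).
Proof.
move=> hmin hdec; exact: (@Helpers.main_result n H S hmin hdec).
Qed.
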